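(* Let $(X,d)$ be a compact metric space with $\dim X=0$ and let $f\in\mathcal{H}(X)$ be equicontinuous. Then $\lim_{\delta\to0}r(\delta)=0$.
   Context: $f$ is equicontinuous if for every $\epsilon>0$ there is $\eta>0$ such that $d(x,y)\le\eta$ implies $\sup_{i\in\mathbb{Z}}d(f^i(x),f^i(y))\le\epsilon$; such $f$ satisfies $X=CR(f)$ (every point is chain recurrent). A $\delta$-chain is a finite sequence $(x_i)_{i=0}^k$, $k\ge1$, with $d(f(x_i),x_{i+1})\le\delta$; a $\delta$-cycle is a $\delta$-chain with $x_0=x_k$, of length $k$. For $f$ with $X=CR(f)$ and $\delta>0$: $x\sim_\delta y$ iff there are $\delta$-chains from $x$ to $y$ and from $y$ to $x$; this is an equivalence relation whose classes ($\delta$-chain components) are finitely many, clopen and $f$-invariant. For a $\delta$-chain component $C$, let $m$ be the gcd of the lengths of all $\delta$-cycles lying in $C$; define $x\sim_{\delta,m}y$ for $x,y\in C$ iff there is a $\delta$-chain from $x$ to $y$ whose length is divisible by $m$. This is an equivalence relation on $C$ with exactly $m$ classes (the $\delta$-cyclic components of $C$), each clopen. $r(\delta)$ denotes the maximum of the diameters of all $\delta$-cyclic components of all $\delta$-chain components of $X$. *)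

(* Defs.v *)
From Stdlib Require Import Reals ZArith Arith List.
Open Scope R_scope.

Section Defs.
Variable X : Type.
Variable d : X -> X -> R.

Definition is_metric : Prop :=
  (forall x y, 0 <= d x y) /\
  (forall x y, d x y = 0 <-> x = y) /\
  (forall x y, d x y = d y x) /\
  (forall x y z, d x z <= d x y + d y z).

Definition is_open (U : X -> Prop) : Prop :=
  forall x, U x -> exists e, 0 < e /\ forall y, d x y < e -> U y.

Definition is_closed (U : X -> Prop) : Prop :=
  is_open (fun x => ~ U x).

Definition is_clopen (U : X -> Prop) : Prop := is_open U /\ is_closed U.

Definition is_compact : Prop :=
  forall (I : Type) (U : I -> X -> Prop),
    (forall i, is_open (U i)) ->
    (forall x, exists i, U i x) ->
    exists l : list I, forall x, exists i, In i l /\ U i x.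

(* dim X = 0 (small inductive dimension zero): every point has arbitrarily
   small clopen neighbourhoods, i.e. X has a base of clopen sets. *)
Definition zero_dim : Prop :=
  forall x e, 0 < e ->
    exists U, is_clopen U /\ U x /\ forall y, U y -> d x y < e.

Definition continuous (f : X -> X) : Prop :=
  forall x e, 0 < e -> exists h, 0 < h /\ forall y, d x y < h -> d (f x) (f y) < e.

Definition homeo_with_inverse (f g : X -> X) : Prop :=
  continuous f /\ continuous g /\
  (forall x, f (g x) = x) /\ (forall x, g (f x) = x).

Fixpoint iter (n : nat) (h : X -> X) (x : X) : X :=
  match n with O => x | S n' => h (iter n' h x) end.

Definition zpow (f g : X -> X) (i : Z) : X -> X :=
  match i with
  | Z0 => fun x => x
  | Zpos p => iter (Pos.to_nat p) f
  | Zneg p => iter (Pos.to_nat p) g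
  end.

Definition equicontinuous (f g : X -> X) : Prop :=
  forall e, 0 < e -> exists h, 0 < h /\
    forall x y, d x y <= h -> forall i : Z, d (zpow f g i x) (zpow f g i y) <= e.

Variable f : X -> X.

Definition chain (delta : R) (k : nat) (x y : X) : Prop :=
  (1 <= k)%nat /\
  exists c : nat -> X, c O = x /\ c k = y /\
    forall i, (i < k)%nat -> d (f (c i)) (c (S i)) <= delta.

Definition chain_equiv (delta : R) (x y : X) : Prop :=
  (exists k, chain delta k x y) /\ (exists k, chain delta k y x).

Definition cycle_in (delta : R) (x : X) (k : nat) : Prop :=
  (1 <= k)%nat /\
  exists c : nat -> X, c O = c k /\
    (forall i, (i < k)%nat -> d (f (c i)) (c (S i)) <= delta) /\
    (forall i, (i <= k)%nat -> chain_equiv delta x (c i)).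

Definition cycle_gcd (delta : R) (x : X) (m : nat) : Prop :=
  (forall k, cycle_in delta x k -> Nat.divide m k) /\
  (forall m', (forall k, cycle_in delta x k -> Nat.divide m' k) -> Nat.divide m' m).

Definition cyclic_equiv (delta : R) (x y : X) : Prop :=
  chain_equiv delta x y /\
  exists m, cycle_gcd delta x m /\
    exists k, chain delta k x y /\ Nat.divide m k.

(* rd is r(delta): the supremum of d(x,y) over pairs x,y in a common
   delta-cyclic component, i.e. the max of the diameters of all
   delta-cyclic components *)
Definition is_r (delta rd : R) : Prop :=
  is_lub (fun v => exists x y, cyclic_equiv delta x y /\ v = d x y) rd.

End Defs.

(* Main.v *)
Require Import Defs.
From Stdlib Require Import Reals ZArith Arith List.
From Stdlib Require Import Lra Lia Classical.
Open Scope R_scope.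

Section H.
Variable X : Type.
Variable d : X -> X -> R.
Hypothesis hmet : is_metric X d.
Hypothesis hcpt : is_compact X d.

Lemma dtri a b c : d a c <= d a b + d b c.
Proof. destruct hmet as (_&_&_&t). apply t. Qed.
Lemma dsym a b : d a b = d b a.
Proof. destruct hmet as (_&_&s&_). apply s. Qed.
Lemma dpos a b : 0 <= d a b.
Proof. destruct hmet as (p&_&_&_). apply p. Qed.
Lemma dself a : d a a = 0.
Proof. destruct hmet as (_&z&_&_). apply z; reflexivity. Qed.

Lemma lebesgue (P : X -> X -> Prop) (Psym: forall a b, P a b -> P b a)
  (Ptr: forall a b c, P a b -> P b c -> P a c)
  (Ploc : forall z, exists r, 0 < r /\ forall w, d z w < r -> P z w) :
  exists lam, 0 < lam /\ forall a b, d a b < lam -> P a b.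
Proof.
  set (I := {p : X * R | 0 < snd p /\ forall w, d (fst p) w < snd p -> P (fst p) w}).
  destruct (hcpt I (fun p y => d (fst (proj1_sig p)) y < snd (proj1_sig p) / 2)) as [l Hl].
  - intros [[z r] [Hr Hz]] y Hy; simpl in *. exists (r/2 - d z y). split. lra.
    intros w Hw. pose proof (dtri z y w). lra.
  - intros x. destruct (Ploc x) as [r [Hr Hx]]. exists (exist _ (x, r) (conj Hr Hx)).
    simpl. rewrite dself. lra.
  - assert (Hmin: exists lam, 0 < lam /\ forall p, In p l -> lam <= snd (proj1_sig p) / 2).
    { clear Hl. induction l as [|p l IH].
      - exists 1. split. lra. intros p [].
      - destruct IH as [lam [Hl0 Hlam]]. destruct p as [[z r] [Hr Hz]]. simpl in Hr.
        exists (Rmin lam (r/2)). split. apply Rmin_pos; lra.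
        intros q [<-|Hq]. simpl. apply Rmin_r. eapply Rle_trans. apply Rmin_l. auto. }
    destruct Hmin as [lam [Hlam Hle]]. exists lam. split; auto. intros a b Hab.
    destruct (Hl a) as [p [Hin Ha]]. specialize (Hle _ Hin).
    destruct p as [[z r] [Hr Hz]]. simpl in *.
    apply Ptr with z. apply Psym, Hz. lra. apply Hz.
    pose proof (dtri z a b). lra.
Qed.

Lemma local_list (l : list (X -> Prop)) : (forall U, In U l -> is_clopen X d U) ->
  forall z, exists r, 0<r /\ forall w, d z w < r -> forall U, In U l -> (U z <-> U w).
Proof.
  intros Hc z. induction l as [|U l IH].
  - exists 1. split. lra. intros w _ U [].
  - destruct IH as [r1 [Hr1 H1]]. intros; apply Hc; right; auto.
    destruct (Hc U (or_introl eq_refl)) as [Ho Hcl].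
    destruct (classic (U z)) as [Uz|Uz].
    + destruct (Ho z Uz) as [e [He He']]. exists (Rmin r1 e). split. apply Rmin_pos; lra.
      intros w Hw V [<-|HV].
      * split; intros; auto. apply He'. eapply Rlt_le_trans. apply Hw. apply Rmin_r.
      * apply H1; auto. eapply Rlt_le_trans. apply Hw. apply Rmin_l.
    + destruct (Hcl z Uz) as [e [He He']]. exists (Rmin r1 e). split. apply Rmin_pos; lra.
      intros w Hw V [<-|HV].
      * split; intros; try tauto. exfalso. apply (He' w); auto.
        eapply Rlt_le_trans. apply Hw. apply Rmin_r.
      * apply H1; auto. eapply Rlt_le_trans. apply Hw. apply Rmin_l.
Qed.

Lemma partition (hdim : zero_dim X d) eps (He: 0<eps) : exists S : X -> X -> Prop,
  (forall a, S a a) /\ (forall a b, S a b -> S b a) /\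
  (forall a b c, S a b -> S b c -> S a c) /\ (forall a b, S a b -> d a b < eps) /\
  exists lam, 0 < lam /\ forall a b, d a b < lam -> S a b.
Proof.
  set (I := {U : X -> Prop | is_clopen X d U /\ forall a b, U a -> U b -> d a b < eps}).
  destruct (hcpt I (fun U => proj1_sig U)) as [l Hl].
  - intros [U [[Ho Hc] Hd]]; simpl; exact Ho.
  - intros x. destruct (hdim x (eps/2)) as [U [HU [Ux Hx]]]. lra.
    assert (Hd : forall a b, U a -> U b -> d a b < eps).
    { intros a b Ua Ub. pose proof (dtri a x b). rewrite (dsym a x) in H.
      pose proof (Hx a Ua). pose proof (Hx b Ub). lra. }
    exists (exist _ U (conj HU Hd)). simpl; exact Ux.
  - set (L := map (@proj1_sig _ _) l).
    set (S := fun a b => forall U, In U L -> (U a <-> U b)).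
    exists S. split; [|split; [|split; [|split]]].
    + intros a U _; tauto.
    + intros a b H U HU; specialize (H U HU); tauto.
    + intros a b c H1 H2 U HU; specialize (H1 U HU); specialize (H2 U HU); tauto.
    + intros a b H. destruct (Hl a) as [U [HU Ua]].
      apply (proj2 (proj2_sig U)); auto. apply (H (proj1_sig U)); auto.
      unfold L. apply in_map; auto.
    + apply lebesgue.
      * intros a b H U HU; specialize (H U HU); tauto.
      * intros a b c H1 H2 U HU; specialize (H1 U HU); specialize (H2 U HU); tauto.
      * apply local_list. intros U HU. unfold L in HU. apply in_map_iff in HU.
        destruct HU as [p [<- _]]. apply (proj1 (proj2_sig p)).
Qed.

Variable f : X -> X.

Lemma iter_add a b x : Defs.iter X (a + b) f x = Defs.iter X a f (Defs.iter X b f x).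
Proof. induction a; simpl; congruence. Qed.

Lemma zpow_nat g n x : zpow X f g (Z.of_nat n) x = Defs.iter X n f x.
Proof. destruct n; simpl; [reflexivity|]. rewrite SuccNat2Pos.id_succ. reflexivity. Qed.

Lemma least (P : nat -> Prop) : (exists n, P n) -> exists n, P n /\ forall m, P m -> (n <= m)%nat.
Proof.
  intros [n Hn]. apply NNPP. intro Hno.
  assert (forall k m, (m <= k)%nat -> ~ P m).
  { induction k; intros m Hm Pm; apply Hno; exists m; split; auto; intros m' Pm'.
    - lia.
    - destruct (Nat.le_gt_cases m m') as [|Hlt]; auto. exfalso.
      apply (IHk m'); [lia|auto]. }
  apply (H n n); auto.
Qed.

End H.

Theorem lemma4p2 (X : Type) (d : X -> X -> R) (f g : X -> X)
  (hmet : is_metric X d) (hcpt : is_compact X d) (hdim : zero_dim X d)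
  (hhomeo : homeo_with_inverse X d f g) (heq : equicontinuous X d f g)
  (r : R -> R) (hr : forall delta, 0 < delta -> is_r X d f delta (r delta)) :
  limit1_in r (fun delta => 0 < delta) 0 0.
Proof.
  intros eps Heps.
  destruct (partition X d hmet hcpt hdim (eps/2)) as (S & Sr & Ss & St & Sd & lam & Hlam & Hsl).
  lra.
  destruct (heq (lam/2)) as [h [Hh Hhe]]. lra.
  set (E := fun a b => forall n, S (Defs.iter X n f a) (Defs.iter X n f b)).
  assert (Er : forall a, E a a) by (intros a n; apply Sr).
  assert (Es : forall a b, E a b -> E b a) by (intros a b H n; apply Ss, H).
  assert (Et : forall a b c, E a b -> E b c -> E a c) by (intros a b c H1 H2 n; eapply St; eauto).
  assert (Esm : forall a b, d a b <= h -> E a b).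
  { intros a b H n. apply Hsl. specialize (Hhe a b H (Z.of_nat n)).
    rewrite !zpow_nat in Hhe. lra. }
  assert (Ef : forall j a b, E a b -> E (Defs.iter X j f a) (Defs.iter X j f b)).
  { intros j a b H n. rewrite <- !iter_add. apply H. }
  assert (Ech : forall delta k a b, delta <= h -> chain X d f delta k a b -> E (Defs.iter X k f a) b).
  { intros delta k a b Hd [_ [c [c0 [ck Hc]]]]. subst.
    assert (forall i, (i <= k)%nat -> E (Defs.iter X i f (c O)) (c i)).
    { induction i; intros Hi. apply Er.
      apply Et with (f (c i)).
      - apply (Ef 1%nat). apply IHi. lia.
      - apply Esm. specialize (Hc i ltac:(lia)). lra. }
    apply H; lia. }
  exists h. split; auto.
  intros delta [Hd Hdist]. simpl in *. unfold R_dist in *.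
  replace (delta - 0) with delta in Hdist by ring. replace (r delta - 0) with (r delta) by ring.
  rewrite Rabs_right in Hdist by lra.
  assert (Hbound : forall x y, cyclic_equiv X d f delta x y -> d x y < eps/2).
  { intros x y [[Hxy Hyx] [m [[Hm1 Hm2] [k [Hk Hmk]]]]].
    assert (Ek := Ech delta _ _ _ ltac:(lra) Hk).
    set (Ret := fun n => E x (Defs.iter X n f x)).
    assert (R0 : Ret O) by apply Er.
    assert (Radd : forall a b, Ret a -> Ret b -> Ret (a+b)%nat).
    { intros a b Ha Hb. unfold Ret. apply Et with (Defs.iter X a f x); auto.
      rewrite iter_add. apply Ef; auto. }
    assert (Rsub : forall a b, Ret a -> Ret b -> (b <= a)%nat -> Ret (a-b)%nat).
    { intros a b Ha Hb Hab. unfold Ret.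
      pose proof (Ef (a-b)%nat _ _ Hb) as H1. rewrite <- iter_add in H1.
      replace (a - b + b)%nat with a in H1 by lia.
      apply Et with (Defs.iter X a f x); auto. }
    assert (Rmul : forall p q, Ret p -> Ret (q*p)%nat).
    { intros p q Hp. induction q; simpl; auto. }
    assert (Rcyc : forall K, cycle_in X d f delta x K -> Ret K).
    { intros K [HK [c [c0 [Hc Heqv]]]].
      assert (Hch : chain X d f delta K (c O) (c O)).
      { split; auto. exists c. split; auto. }
      pose proof (Ech delta _ _ _ ltac:(lra) Hch) as EK.
      destruct (Heqv O ltac:(lia)) as [[j Hj] [j' Hj']].
      pose proof (Ech delta _ _ _ ltac:(lra) Hj) as E1.
      pose proof (Ech delta _ _ _ ltac:(lra) Hj') as E2.
      assert (Rt : Ret (j' + j)%nat).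
      { unfold Ret. apply Es. rewrite iter_add. apply Et with (Defs.iter X j' f (c O)); auto. }
      assert (RKt : Ret (K + (j' + j))%nat).
      { unfold Ret. apply Es.
        pose proof (Ef K _ _ E1) as E3. rewrite <- iter_add in E3.
        assert (E4 : E (Defs.iter X (K + j) f x) (Defs.iter X j f x)) by (eapply Et; eauto).
        pose proof (Ef j' _ _ E4) as E5. rewrite <- !iter_add in E5.
        replace (K + (j' + j))%nat with (j' + (K + j))%nat by lia.
        apply Et with (Defs.iter X (j' + j) f x); auto. }
      pose proof (Rsub _ _ RKt Rt ltac:(lia)). replace K with (K + (j' + j) - (j' + j))%nat by lia.
      auto. }
    assert (Rk : Ret k).
    { destruct (classic (exists n, (1 <= n)%nat /\ Ret n)) as [Hex|Hno].
      - destruct (least (fun n => (1 <= n)%nat /\ Ret n) Hex) as [p [[Hp1 Hp] Hmin]].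
        assert (Rdiv : forall n, Ret n -> Nat.divide p n).
        { intros n Hn. pose proof (Nat.div_mod n p ltac:(lia)) as Hdm.
          assert (Rq : Ret (n / p * p)%nat) by (apply Rmul; auto).
          assert (Rr : Ret (n mod p)%nat).
          { replace (n mod p)%nat with (n - n / p * p)%nat by lia. apply Rsub; auto. lia. }
          pose proof (Nat.mod_upper_bound n p ltac:(lia)).
          destruct (Nat.eq_dec (n mod p) 0) as [H0|H0].
          - exists (n / p)%nat. lia.
          - assert (Hm1p : (1 <= n mod p)%nat) by lia. specialize (Hmin (n mod p)%nat (conj Hm1p Rr)). lia. }
        assert (Hpm : Nat.divide p m) by (apply Hm2; intros K HK; apply Rdiv, Rcyc, HK).
        destruct (Nat.divide_trans _ _ _ Hpm Hmk) as [q ->]. apply Rmul; auto.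
      - exfalso.
        assert (Nat.divide (Nat.succ m) m).
        { apply Hm2. intros K HK. exfalso. apply Hno. exists K. split.
          destruct HK; auto. apply Rcyc, HK. }
        destruct H as [z Hz]. destruct Hk as [Hk1 _]. destruct Hmk as [w Hw].
        destruct z; simpl in Hz; [|lia]. subst m. rewrite Nat.mul_0_r in Hw. lia. }
    apply (Sd x y (Et _ _ _ Rk Ek O)). }
  destruct (hr delta Hd) as [Hub Hleast].
  assert (Hup : r delta <= eps/2).
  { apply Hleast. intros v [x [y [Hc ->]]]. left. apply Hbound, Hc. }
  destruct (classic (exists x y, cyclic_equiv X d f delta x y)) as [[x [y Hc]]|Hno].
  - assert (d x y <= r delta) by (apply Hub; exists x, y; auto).
    pose proof (dpos X d hmet x y).
    unfold Rabs; destruct Rcase_abs; lra.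
  - exfalso. assert (r delta <= r delta - 1).
    { apply Hleast. intros v [x [y [Hc _]]]. exfalso. apply Hno; eauto. }
    lra.
Qed.
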